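(* Let $C_i\subseteq\mathbb F_q^{n_i}$ ($i\in[t]$) be classical codes and let $c\in C_1\boxplus\cdots\boxplus C_t$. For any two decompositions $c=c_1+\cdots+c_t=c_1'+\cdots+c_t'$ with $c_i,c_i'\in C^{(i)}$ for all $i\in[t]$, there exist $c_{i,j}\in C^{(i,j)}$ for $1\le i<j\le t$ such that for all $i\in[t]$, $$c_i-c_i'=\sum_{j=1}^{i-1}c_{j,i}-\sum_{j=i+1}^{t}c_{i,j}.$$
   Context: Identify $\mathbb F_q^{n_1}\otimes\cdots\otimes\mathbb F_q^{n_t}$ with $t$-dimensional arrays; a direction-$i$ column is the vector in $\mathbb F_q^{n_i}$ obtained by fixing all coordinates except the $i$-th. $C^{(i)}=\mathbb F_q^{n_1}\otimes\cdots\otimes C_i\otimes\cdots\otimes\mathbb F_q^{n_t}$ is the space of arrays all of whose direction-$i$ columns lie in $C_i$; $C^{(i,j)}=C^{(i)}\cap C^{(j)}$; $C_1\boxplus\cdots\boxplus C_t=C^{(1)}+\cdots+C^{(t)}$. *)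

(* Defs.v *)
From HB Require Import structures.
From mathcomp Require Import all_boot all_order all_algebra all_field.
Set Implicit Arguments. Unset Strict Implicit. Unset Printing Implicit Defensive.
Import GRing.Theory.
Local Open Scope ring_scope.

Definition pos (t : nat) (n : 'I_t -> nat) : finType :=
  {dffun forall i : 'I_t, 'I_(n i)}.

(* Arrays = elements of F^{n_1} (x) ... (x) F^{n_t}. *)
Definition array (F : fieldType) (t : nat) (n : 'I_t -> nat) :=
  {ffun pos n -> F}.

Definition column (F : fieldType) (t : nat) (n : 'I_t -> nat)
    (a : array F n) (i : 'I_t) (x : pos n) : 'rV[F]_(n i) :=
  \row_(k < n i) a (finfun (dfwith (fun j => x j) k)).

Definition inCi (F : fieldType) (t : nat) (n : 'I_t -> nat)
    (C : forall i : 'I_t, {vspace 'rV[F]_(n i)}) (i : 'I_t) (a : array F n) :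
    Prop :=
  forall x : pos n, column a i x \in C i.

Definition inCij (F : fieldType) (t : nat) (n : 'I_t -> nat)
    (C : forall i : 'I_t, {vspace 'rV[F]_(n i)}) (i j : 'I_t) (a : array F n) :
    Prop :=
  inCi C i a /\ inCi C j a.

(* Main.v *)
Require Import Defs.
From HB Require Import structures.
From mathcomp Require Import all_boot all_order all_algebra all_field.
Import GRing.Theory.
Local Open Scope ring_scope.


Lemma subrACA (V : zmodType) (a b c d : V) : a - b - (c - d) = a - c - (b - d).
Proof. rewrite !opprB !addrA -!addrA; congr (_ + _). rewrite addrCA [RHS]addrCA; congr (_ + _); apply: addrC. Qed.

Section Abs.
Set Implicit Arguments. Unset Strict Implicit.
Variable V : zmodType.
Variable G : nat -> V -> V.
Hypothesis GB : forall k x y, G k (x - y) = G k x - G k y.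
Hypothesis GG : forall k x, G k (G k x) = G k x.
Hypothesis GC : forall k l x, G k (G l x) = G l (G k x).

Lemma G0 k : G k 0 = 0.
Proof. by have := GB k 0 0; rewrite !subrr. Qed.
Lemma GN k x : G k (- x) = - G k x.
Proof. by rewrite -sub0r GB G0 sub0r. Qed.
Lemma GD k x y : G k (x + y) = G k x + G k y.
Proof. by have := GB k x (- y); rewrite opprK GN opprK. Qed.
Lemma Gsum k (I : Type) (r : seq I) P (f : I -> V) :
  G k (\sum_(i <- r | P i) f i) = \sum_(i <- r | P i) G k (f i).
Proof. exact: (big_morph (G k) (GD k) (G0 k)). Qed.

Definition Fs (s : seq nat) (x : V) := foldr (fun k y => y - G k y) x s.

Lemma FsB s x y : Fs s (x - y) = Fs s x - Fs s y.
Proof. elim: s => [|k s IH] //=; by rewrite IH GB subrACA. Qed.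
Lemma Fs0 s : Fs s 0 = 0.
Proof. by have := FsB s 0 0; rewrite !subrr. Qed.
Lemma FsN s x : Fs s (- x) = - Fs s x.
Proof. by rewrite -sub0r FsB Fs0 sub0r. Qed.
Lemma FsD s x y : Fs s (x + y) = Fs s x + Fs s y.
Proof. by have := FsB s x (- y); rewrite opprK FsN opprK. Qed.
Lemma Fssum s (I : Type) (r : seq I) P (f : I -> V) :
  Fs s (\sum_(i <- r | P i) f i) = \sum_(i <- r | P i) Fs s (f i).
Proof. exact: (big_morph (Fs s) (FsD s) (Fs0 s)). Qed.
Lemma GFs i s x : G i (Fs s x) = Fs s (G i x).
Proof. elim: s => [|k s IH] //=; by rewrite GB GC IH. Qed.
Lemma Fs_kill s j x : j \in s -> G j x = x -> Fs s x = 0.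
Proof.
elim: s => [|k s IH] //=; rewrite in_cons => /orP [/eqP -> Hx|Hj Hx].
  by rewrite GFs Hx subrr.
by rewrite IH // G0 subrr.
Qed.

Variable t : nat.
Definition Q m x := Fs (iota m.+1 (t - m.+1)) x.

Lemma Qstep k x : (k.+1 < t)%N -> G k.+1 (Q k.+1 x) = Q k.+1 x - Q k x.
Proof.
move=> Hk; rewrite /Q.
have -> : (t - k.+1 = (t - k.+2).+1)%N by rewrite subnSK.
by rewrite /= opprB addrC subrK.
Qed.

Lemma Qtop x : Q t.-1 x = x.
Proof. by rewrite /Q; case: t => [|u] //=; rewrite subnn. Qed.

Variable d : nat -> V.
Hypothesis Hd : forall k, (k < t)%N -> G k (d k) = d k.
Hypothesis Hs : \sum_(0 <= k < t) d k = 0.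

Definition cc i j := - G j (Q j (d i)).

Lemma cc_in i j : G j (cc i j) = cc i j /\ ((i < t)%N -> G i (cc i j) = cc i j).
Proof.
rewrite /cc; split; first by rewrite GN GG.
by move=> Hi; rewrite !GN GC /Q GFs Hd.
Qed.

Lemma cc_eq i : (i < t)%N ->
  d i = \sum_(0 <= j < i) cc j i - \sum_(i.+1 <= j < t) cc i j.
Proof.
move=> Hi.
have H1 : \sum_(0 <= j < i) cc j i = Q i (d i).
  rewrite /cc sumrN -Gsum -Fssum.
  have -> : \sum_(0 <= j < i) d j = - d i - \sum_(i.+1 <= j < t) d j.
    move: Hs; rewrite (big_cat_nat _ (n := i)) //=; last exact: ltnW.
    by rewrite (big_ltn Hi) /= => /eqP; rewrite addr_eq0 opprD => /eqP.
  rewrite FsB FsN Fssum big1_seq ?subr0.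
    by rewrite GN opprK /Q GFs Hd.
  move=> j /andP [_]; rewrite mem_index_iota => /andP [Hj1 Hj2].
  apply: (Fs_kill (j := j)); last exact: Hd.
  by rewrite mem_iota Hj1 /= subnKC.
have H2 : \sum_(i.+1 <= j < t) cc i j = - (d i - Q i (d i)).
  rewrite /cc sumrN big_add1.
  rewrite (eq_big_nat _ _ (F2 := fun k => Q k.+1 (d i) - Q k (d i))); last first.
    move=> k /andP [_ Hk]; apply: Qstep; by rewrite -ltn_predRL.
  rewrite (@telescope_sumr _ i t.-1 (fun k => Q k (d i))) ?Qtop //; by case: (t) Hi.
by rewrite H1 H2 opprK addrC subrK.
Qed.
End Abs.
Unset Implicit Arguments. Set Strict Implicit.
Section Conc.
Variables (F : finFieldType) (t : nat) (n : 'I_t -> nat).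
Variable C : forall i : 'I_t, {vspace 'rV[F]_(n i)}.

Definition upd (x : pos n) (i : 'I_t) (k : 'I_(n i)) : pos n :=
  finfun (dfwith (fun j => x j) k).

Lemma U1 (x : pos n) i k : upd x i k i = k.
Proof. by rewrite /upd ffunE dfwith_in. Qed.
Lemma U2 x i k j : i != j -> upd x i k j = x j.
Proof. by move=> H; rewrite /upd ffunE dfwith_out. Qed.
Lemma U3 x i k l : upd (upd x i k) i l = upd x i l.
Proof.
apply/ffunP => j; rewrite /upd !ffunE.
case: (eqVneq i j) => [E|H]; first by subst j; rewrite !dfwith_in.
by rewrite !dfwith_out // ffunE dfwith_out.
Qed.
Lemma U4 x i : upd x i (x i) = x.
Proof.
apply/ffunP => j; rewrite /upd !ffunE.
case: (eqVneq i j) => [E|H]; first by subst j; rewrite !dfwith_in.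
by rewrite !dfwith_out.
Qed.
Lemma U5 x i k j l : i != j ->
  upd (upd x i k) j l = upd (upd x j l) i k.
Proof.
move=> Hij; apply/ffunP => m; rewrite /upd !ffunE.
case: (eqVneq j m) => [E|H]; first subst m.
  by rewrite dfwith_in dfwith_out // ffunE dfwith_in.
rewrite dfwith_out // ffunE.
case: (eqVneq i m) => [E|H']; first by subst m; rewrite !dfwith_in.
by rewrite !dfwith_out // ffunE dfwith_out.
Qed.

Definition M i : 'M[F]_(n i) := lin1_mx (projv (C i)).
Lemma MP i (u : 'rV[F]_(n i)) : u *m M i = projv (C i) u.
Proof. exact: mul_rV_lin1. Qed.

Definition E i (a : array F n) : array F n :=
  [ffun x => \sum_(k < n i) a (upd x i k) * M i k (x i)].

Lemma EE i a x : E i a x = (column a i x *m M i) 0 (x i).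
Proof. by rewrite ffunE !mxE; apply: eq_bigr => k _; rewrite !mxE. Qed.

Lemma colE i a x : column (E i a) i x = column a i x *m M i.
Proof.
apply/rowP => k; rewrite !mxE ffunE U1.
by apply: eq_bigr => l _; rewrite !mxE -/(upd x i l) U3.
Qed.

Lemma inCiE i a : inCi C i a <-> E i a = a.
Proof.
split => H.
  apply/ffunP => x; rewrite EE MP projv_id; last exact: H.
  by rewrite mxE -/(upd x i (x i)) U4.
by move=> x; rewrite -H colE MP memv_proj.
Qed.

Lemma EB i a b : E i (a - b) = E i a - E i b.
Proof.
apply/ffunP => x; rewrite !ffunE -sumrB; apply: eq_bigr => k _.
by rewrite !ffunE mulrBl.
Qed.

Lemma EG i a : E i (E i a) = E i a.
Proof. apply/inCiE => x; by rewrite colE MP memv_proj. Qed.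

Lemma EC i j a : E i (E j a) = E j (E i a).
Proof.
case: (eqVneq i j) => [->//|Hij].
apply/ffunP => x; rewrite !ffunE.
under eq_bigr => k _ do rewrite ffunE mulr_suml.
under [RHS]eq_bigr => k _ do rewrite ffunE mulr_suml.
rewrite exchange_big /=; apply: eq_bigr => l _; apply: eq_bigr => k _.
rewrite U2 // U2 1?eq_sym // U5 //.
by rewrite mulrAC.
Qed.
End Conc.
Lemma L1 (V : zmodType) (f : nat -> V) i t : (i <= t)%N ->
  \sum_(0 <= j < i) f j = \sum_(j < t | (j < i)%N) f j.
Proof. by move=> H; rewrite (big_nat_widen 0 i t) // big_mkord. Qed.
Lemma L2 (V : zmodType) (f : nat -> V) i t : (i < t)%N ->
  \sum_(i.+1 <= j < t) f j = \sum_(j < t | (i < j)%N) f j.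
Proof.
move=> H; rewrite -big_mkord [RHS](big_cat_nat _ (n := i.+1)) //=.
rewrite [X in _ = X + _]big1_seq ?add0r; last first.
  move=> j /andP [Hj]; rewrite mem_index_iota ltnS => /andP [_ Hj'].
  by rewrite ltnNge Hj' in Hj.
rewrite big_nat_cond [RHS]big_nat_cond; apply: eq_bigl => j.
by rewrite andbT andbAC andbb.
Qed.

Theorem lemma3p1 (F : finFieldType) (t : nat) (n : 'I_t -> nat)
    (C : forall i : 'I_t, {vspace 'rV[F]_(n i)})
    (c : array F n) (c1 c2 : 'I_t -> array F n) :
  (forall i, inCi C i (c1 i)) ->
  (forall i, inCi C i (c2 i)) ->
  c = \sum_(i < t) c1 i ->
  c = \sum_(i < t) c2 i ->
  exists cc : 'I_t -> 'I_t -> array F n,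
    (forall i j : 'I_t, (i < j)%N -> inCij C i j (cc i j)) /\
    (forall i : 'I_t,
       c1 i - c2 i = \sum_(j < t | (j < i)%N) cc j i
                     - \sum_(j < t | (i < j)%N) cc i j).
Proof.
move=> H1 H2 Hc1 Hc2.
pose G k (a : array F n) := if insub k is Some i then E _ _ _ C i a else a.
have GE : forall i : 'I_t, G i = E _ _ _ C i by move=> i; rewrite /G valK.
have GB : forall k x y, G k (x - y) = G k x - G k y.
  by move=> k x y; rewrite /G; case: insub => // i; exact: EB.
have GG : forall k x, G k (G k x) = G k x.
  by move=> k x; rewrite /G; case: insub => // i; exact: EG.
have GC : forall k l x, G k (G l x) = G l (G k x).
  by move=> k l x; rewrite /G; case: insub => [i|]; case: insub => [j|] //; exact: EC.
pose d k : array F n := if insub k is Some i then c1 i - c2 i else 0.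
have dE : forall i : 'I_t, d i = c1 i - c2 i by move=> i; rewrite /d valK.
have Hd : forall k, (k < t)%N -> G k (d k) = d k.
  move=> k Hk; have -> : k = val (Ordinal Hk) by [].
  by rewrite dE GE EB !(proj1 (inCiE _ _ _ C _ _)).
have Hs : \sum_(0 <= k < t) d k = 0.
  by rewrite big_mkord; under eq_bigr do rewrite dE; rewrite sumrB -Hc1 -Hc2 subrr.
exists (fun i j : 'I_t => cc G t d i j).
split.
  move=> i j Hij; have [A B] := cc_in GB GG GC Hd i j.
  split; apply/inCiE; rewrite -GE; [apply: B; exact: ltn_ord | exact: A].
move=> i; rewrite -dE (cc_eq GB GC Hd Hs (ltn_ord i)).
congr (_ - _).
  by rewrite (L1 _ _ _ t) // ltnW.
by rewrite (L2 _ _ _ t).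
Qed.
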